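(* Let $G$ and $H$ be graphs such that the direct product $G\times H$ is a balanced distance magic graph, and let $\ell$ be a balanced distance magic labeling of $G\times H$ in which $(g,h)$ and $(g',h)$ are twins and $(g,h')$ and $(g'',h')$ are twins, where $g''\neq g'$. Let $\widehat\ell$ be obtained from $\ell$ by exchanging the labels of $(g',h')$ and $(g'',h')$, i.e. $\widehat\ell(g',h')=\ell(g'',h')$, $\widehat\ell(g'',h')=\ell(g',h')$, and $\widehat\ell(a,b)=\ell(a,b)$ for all other vertices. Then $\widehat\ell$ is a balanced distance magic labeling of $G\times H$ in which $(g,h')$ and $(g',h')$ are twins.
   Context: All graphs are finite and simple. For a graph $G$ and vertex $x$, $N(x)=N_G(x)$ is the (open) neighborhood of $x$. A distance magic labeling of a graph $G$ of order $N$ is a bijection $\ell\colon V(G)\to\{1,\dots,N\}$ for which there is a constant $k$ such that the weight $w(x)=\sum_{y\in N(x)}\ell(y)$ equals $k$ for every $x\in V(G)$. A balanced distance magic labeling of a graph $G$ with an even number $N$ of vertices is a distance magic labeling $\ell$ such that for every $w\in V(G)$: whenever $u\in N(w)$ has $\ell(u)=i$, there is $v\in N(w)$ with $\ell(v)=N+1-i$. Under such $\ell$, the vertices labeled $i$ and $N+1-i$ are called twins (with respect to $\ell$). $G$ is a balanced distance magic graph if it has an even number of vertices and admits a balanced distance magic labeling. The direct product $G\times H$ has vertex set $V(G)\times V(H)$, with $(g,h)$ adjacent to $(g',h')$ iff $gg'\in E(G)$ and $hh'\in E(H)$. *)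

(* Defs.v *)
(* A simple graph is a finType of vertices with a
   symmetric irreflexive relation. *)
From mathcomp Require Import all_boot.
Set Implicit Arguments. Unset Strict Implicit. Unset Printing Implicit Defensive.

Definition dprod_rel (T1 T2 : finType) (e1 : rel T1) (e2 : rel T2) : rel (T1 * T2) :=
  fun x y => e1 x.1 y.1 && e2 x.2 y.2.

(* l : V -> {1..N} bijection, N = #|V| (injective into {1..N} of size N) *)
Definition is_labeling (T : finType) (l : T -> nat) : Prop :=
  injective l /\ forall x, 0 < l x <= #|T|.

Definition weight (T : finType) (e : rel T) (l : T -> nat) (x : T) : nat :=
  \sum_(y | e x y) l y.

Definition distance_magic_labeling (T : finType) (e : rel T) (l : T -> nat) : Prop :=
  is_labeling l /\ exists k, forall x, weight e l x = k.

Definition balanced_dml (T : finType) (e : rel T) (l : T -> nat) : Prop :=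
  ~~ odd #|T| /\ distance_magic_labeling e l /\
  forall w u, e w u -> exists v, e w v /\ l v = #|T|.+1 - l u.

Definition balanced_dm_graph (T : finType) (e : rel T) : Prop :=
  exists l, balanced_dml e l.

Definition twins (T : finType) (l : T -> nat) (a b : T) : Prop :=
  l a + l b = #|T|.+1.

Definition swap_labels (T : finType) (l : T -> nat) (a b : T) : T -> nat :=
  fun x => if x == a then l b else if x == b then l a else l x.

(* Main.v *)
Require Import Defs.
From mathcomp Require Import all_boot.
From mathcomp Require Import zify.
Set Implicit Arguments. Unset Strict Implicit.

Section Aux.
Variable T : finType.
Variable e : rel T.
Hypothesis sym : symmetric e.

Definition swp (a b x : T) : T := if x == a then b else if x == b then a else x.

Lemma swpK a b : involutive (swp a b).
Proof.
move=> x; rewrite /swp.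
case: (eqVneq x a) => [->|xa]; first by rewrite eqxx; case: (eqVneq b a) => [->|]; rewrite ?eqxx.
case: (eqVneq x b) => [->|xb]; first by rewrite eqxx.
by rewrite (negPf xa) (negPf xb).
Qed.

Lemma swap_swp (l : T -> nat) a b x : swap_labels l a b x = l (swp a b x).
Proof. by rewrite /swap_labels /swp; case: ifP => _ //; case: ifP. Qed.

Lemma e_swp a b (hab : forall w, e a w = e b w) x y : e x (swp a b y) = e x y.
Proof.
rewrite /swp; case: (eqVneq y a) => [->|_].
  by rewrite sym -hab sym.
case: (eqVneq y b) => [->|_] //.
by rewrite sym hab sym.
Qed.

Lemma swap_balanced (l : T -> nat) a b :
  (forall w, e a w = e b w) -> balanced_dml e l -> balanced_dml e (swap_labels l a b).
Proof.
move=> hab [hodd [[[linj lbd] [k hk]] hbal]].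
have hsw : swap_labels l a b =1 l \o swp a b by move=> x; rewrite swap_swp.
split=> //; split.
  split; first split.
    move=> x y; rewrite !hsw /= => /linj.
    by move/(congr1 (swp a b)); rewrite !swpK.
  by move=> x; rewrite hsw; apply: lbd.
  exists k => x; rewrite -(hk x) /weight.
  rewrite (reindex_inj (can_inj (swpK a b))) /=.
  apply: eq_big => y; first by rewrite e_swp.
  by move=> _; rewrite hsw /= swpK.
move=> w u hwu.
have: e w (swp a b u) by rewrite e_swp.
case/hbal => v [hwv hv].
exists (swp a b v); split; first by rewrite e_swp.
by rewrite !hsw /= swpK hv.
Qed.

Lemma twins_nb (l : T -> nat) a b :
  balanced_dml e l -> twins l a b -> forall w, e a w = e b w.
Proof.
move=> [hodd [[[linj lbd] _] hbal]] htw.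
have H : forall a b, twins l a b -> forall w, e w a -> e w b.
  move=> a' b' ht w hw; case: (hbal _ _ hw) => v [hv hlv].
  have -> : b' = v; last by [].
  apply: linj; rewrite hlv; move: ht; rewrite /twins; lia.
move=> w; rewrite sym [e b w]sym; apply/idP/idP; first exact: H.
apply: H; move: htw; rewrite /twins; lia.
Qed.

Lemma weight0 (l : T -> nat) x y :
  (forall z, 0 < l z) -> weight e l x = 0 -> e x y = false.
Proof.
move=> pos; rewrite /weight; case: (boolP (e x y)) => // exy.
rewrite (bigD1 y) //= => /eqP; rewrite addn_eq0 => /andP [/eqP h _].
by have := pos y; rewrite h.
Qed.

Lemma twins_neq (l : T -> nat) a b : ~~ odd #|T| -> twins l a b -> a != b.
Proof.
move=> hodd; rewrite /twins; case: (eqVneq a b) => // -> /(congr1 odd).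
by rewrite oddD addbb /= (negPf hodd).
Qed.

End Aux.

Theorem lemma3 (TG TH : finType) (eG : rel TG) (eH : rel TH)
  (symG : symmetric eG) (irrG : irreflexive eG)
  (symH : symmetric eH) (irrH : irreflexive eH)
  (l : TG * TH -> nat) (g g' g'' : TG) (h h' : TH) :
  balanced_dm_graph (dprod_rel eG eH) ->
  balanced_dml (dprod_rel eG eH) l ->
  twins l (g, h) (g', h) ->
  twins l (g, h') (g'', h') ->
  g'' != g' ->
  balanced_dml (dprod_rel eG eH) (swap_labels l (g', h') (g'', h')) /\
  twins (swap_labels l (g', h') (g'', h')) (g, h') (g', h').
Proof.
move=> _ hb t1 t2 _.
set E := dprod_rel eG eH.
have symE : symmetric E.
  by move=> [x1 x2] [y1 y2]; rewrite /E /dprod_rel /= symG symH.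
have N1 := twins_nb symE hb t1.
have N2 := twins_nb symE hb t2.
have hb' := hb; case: hb' => hodd [[[linj lbd] [k hk]] _].
have pos : forall z, 0 < l z by move=> z; case/andP: (lbd z).
have hab : forall w, E (g', h') w = E (g'', h') w.
  move=> [a b]; rewrite /E /dprod_rel /=.
  case hb' : (eH h' b); rewrite ?andbF ?andbT //.
  have := N2 (a, b); rewrite /E /dprod_rel /= hb' !andbT => <-.
  case: (pickP (eH h)) => [c hc|hn].
    by have := N1 (a, c); rewrite /E /dprod_rel /= hc !andbT.
  have w0 : weight E l (g, h) = 0.
    by rewrite /weight big_pred0 // => -[y1 y2]; rewrite /E /dprod_rel /= hn andbF.
  have k0 : k = 0 by rewrite -(hk (g, h)).
  have e1 := weight0 (e:=E) (x:=(g, h')) (a, b) pos (etrans (hk _) k0).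
  have e2 := weight0 (e:=E) (x:=(g', h')) (a, b) pos (etrans (hk _) k0).
  move: e1 e2; rewrite /E /dprod_rel /= hb' !andbT => -> -> //.
split; first exact: swap_balanced.
have n1 := twins_neq hodd t1; have n2 := twins_neq hodd t2.
rewrite /twins /swap_labels.
have -> : ((g, h') == (g', h')) = false.
  by apply/negbTE; move: n1; apply: contra => /eqP [->].
have -> : ((g, h') == (g'', h')) = false.
  by apply/negbTE; move: n2; apply: contra => /eqP [->].
by rewrite eqxx.
Qed.
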